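(* Let $\mathcal{G}$ be a class of graphs of unbounded average degree, and let $\mathcal{A}$ be the class of all (unweighted) orientations of graphs in $\mathcal{G}$. Then $\mathcal{A}$ is not size-pliable.
   Context: An orientation of a graph is viewed as a structure over the signature $\{e\}$ with one binary symbol, where $e^{\mathbb{A}}(u,v)=1$ if $u\to v$ is an arc and $0$ otherwise. For structures $\mathbb{A},\mathbb{B}$ over a signature $\sigma$ (finite domain with functions $f^{\mathbb{A}}\colon A^{\mathrm{ar}(f)}\to\mathbb{Q}_{\ge0}$), $\mathrm{opt}(\mathbb{A},\mathbb{B})=\max_{h\colon A\to B}\sum_f\sum_{\bar x}f^{\mathbb{A}}(\bar x)f^{\mathbb{B}}(h(\bar x))$ over all maps, and $d_{\mathrm{opt}}(\mathbb{A},\mathbb{B})=\sup_{\mathbb{C}}|\ln\mathrm{opt}(\mathbb{A},\mathbb{C})-\ln\mathrm{opt}(\mathbb{B},\mathbb{C})|$ over all $\sigma$-structures $\mathbb{C}$ ($\ln0=-\infty$, $|\ln0-\ln0|=0$). A class $\mathcal{A}$ is size-pliable if for every $\varepsilon>0$ there is $k$ such that every $\mathbb{A}\in\mathcal{A}$ (signature $\sigma$) has a $\sigma$-structure $\mathbb{B}$ with domain of size at most $k$ and $d_{\mathrm{opt}}(\mathbb{A},\mathbb{B})\le\varepsilon$. *)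

(* Defs.v *)
From HB Require Import structures.
From mathcomp Require Import all_boot all_order all_algebra.
From mathcomp Require Import boolp classical_sets reals constructive_ereal ereal exp.
Set Implicit Arguments. Unset Strict Implicit. Unset Printing Implicit Defensive.
Import Order.TTheory GRing.Theory Num.Theory.
Local Open Scope ring_scope.

(* A structure over the signature {e} (one binary symbol): a finite domain
   and a nonnegative rational-valued binary function e. *)
Record estructure := EStructure {
  sdom : finType;
  srel : sdom -> sdom -> rat;
  srel_ge0 : forall x y, 0 <= srel x y }.

Definition hom_value (A B : estructure) (h : {ffun sdom A -> sdom B}) : rat :=
  \sum_(x : sdom A) \sum_(y : sdom A) srel x y * srel (h x) (h y).

(* opt(A,B) = max over all maps A -> B (all values are >= 0, so the
   default 0 of the big max is harmless; it is only reached if no map exists). *)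
Definition opt (A B : estructure) : rat :=
  \big[Num.max/0]_(h : {ffun sdom A -> sdom B}) hom_value h.

(* |ln a - ln b| with ln 0 = -oo, |ln 0 - ln 0| = 0, for a, b >= 0 *)
Definition ln_dist (R : realType) (a b : rat) : \bar R :=
  if (a == 0) && (b == 0) then 0%E
  else if (a == 0) || (b == 0) then +oo%E
  else (`| ln (ratr a : R) - ln (ratr b) |)%:E.

Definition d_opt (R : realType) (A B : estructure) : \bar R :=
  ereal_sup [set r | exists C : estructure, r = ln_dist R (opt A C) (opt B C)].

Definition size_pliable (R : realType) (cls : estructure -> Prop) : Prop :=
  forall eps : R, 0 < eps -> exists k : nat, forall A, cls A ->
    exists B : estructure, (#|sdom B| <= k)%N /\ (d_opt R A B <= eps%:E)%E.

Record graph := Graph {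
  gV : finType;
  gE : rel gV;
  gE_sym : symmetric gE;
  gE_irrefl : irreflexive gE }.

Definition avg_degree (G : graph) : rat :=
  (\sum_(v : gV G) #|[set u | @gE G v u]|)%:R / #|gV G|%:R.

Definition unbounded_avg_degree (cls : graph -> Prop) : Prop :=
  forall d : rat, exists G, cls G /\ d < avg_degree G.

Definition is_orientation (G : graph) (o : rel (gV G)) : Prop :=
  (forall u v, o u v -> @gE G u v) /\
  (forall u v, @gE G u v -> o u v (+) o v u).

Lemma orient_rel_ge0 (G : graph) (o : rel (gV G)) (x y : gV G) :
  0 <= (if o x y then 1 else 0 : rat).
Proof. by case: (o x y). Qed.

Definition orient_struct (G : graph) (o : rel (gV G)) : estructure :=
  @EStructure (gV G) (fun x y => if o x y then 1 else 0) (orient_rel_ge0 o).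

Definition orientations_of (cls : graph -> Prop) : estructure -> Prop :=
  fun A => exists G : graph, cls G /\ exists o : rel (gV G),
    is_orientation o /\ A = orient_struct o.

(* Main.v *)
Require Import Defs.
From HB Require Import structures.
From mathcomp Require Import all_boot all_order all_algebra.
From mathcomp Require Import boolp classical_sets reals constructive_ereal ereal exp.
From mathcomp Require Import sequences.
From mathcomp Require Import zify lra.
Set Implicit Arguments. Unset Strict Implicit. Unset Printing Implicit Defensive.
Import Order.TTheory GRing.Theory Num.Theory.

Section Comb.
Variable G : graph.
Local Notation V := (gV G).
Local Notation E := (@gE G).

Definition ltp (p : V * V) : bool := (enum_rank p.1 < enum_rank p.2)%N.

Definition ob (b : {ffun V * V -> bool}) : rel V :=
  fun u v => E u v && (if (enum_rank u < enum_rank v)%N then b (u, v) else ~~ b (v, u)).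

Lemma ob_orient b : is_orientation (ob b).
Proof.
split; first by move=> u v /andP[].
move=> u v Euv; rewrite /ob Euv [E v u]gE_sym Euv /=.
have nuv : u != v by apply: contraTneq Euv => ->; rewrite gE_irrefl.
have : enum_rank u != enum_rank v by apply: contra nuv => /eqP /enum_rank_inj ->.
case: ltngtP => //.
- by move=> _ _; rewrite addbN addbb.
- by move=> _ _; rewrite addNb addbb.
- by move=> /val_inj ->; rewrite eqxx.
Qed.

Lemma arcs2 (o : rel V) : is_orientation o ->
  (\sum_u \sum_v (o u v : nat)) * 2 = \sum_u \sum_v (E u v : nat).
Proof.
move=> [H1 H2].
rewrite muln2 -addnn.
rewrite {2}(exchange_big) /= -big_split /=; apply: eq_bigr => u _.
rewrite -big_split /=; apply: eq_bigr => v _.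
case Euv: (E u v).
  by move: (H2 _ _ Euv); case: (o u v); case: (o v u).
case h1: (o u v); first by move: (H1 _ _ h1); rewrite Euv.
case h2: (o v u); first by move: (H1 _ _ h2); rewrite [E v u]gE_sym Euv.
by [].
Qed.

Lemma prod_split (F : V * V -> nat) :
  \prod_p F p = \prod_(p | ltp p) (F p * F (p.2, p.1)) * \prod_(p | p.1 == p.2) F p.
Proof.
rewrite (bigID ltp) /= big_split /= -mulnA; congr (_ * _).
rewrite (bigID (fun p : V * V => ltp (p.2, p.1))) /=; congr (_ * _).
  rewrite (reindex_inj (h := fun p : V * V => (p.2, p.1))) /=; last first.
    by move=> [a b] [c d] /= [-> ->].
  apply: eq_bigl => -[a c] /=; rewrite /ltp /=.
  by case: ltngtP.
apply: eq_bigl => -[a c] /=; rewrite /ltp /=.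
case: ltngtP => //= H.
- by apply/esym/negbTE; apply: contraTneq H => ->; rewrite ltnn.
- by apply/esym/negbTE; apply: contraTneq H => ->; rewrite ltnn.
- by apply/esym/eqP; apply: enum_rank_inj; apply: val_inj.
Qed.

Variable k : nat.
Definition Xv (b : {ffun V * V -> bool}) (g : {ffun V -> 'I_k})
  (D : {ffun 'I_k * 'I_k -> bool}) : nat :=
  \sum_(p : V * V) (ob b p.1 p.2 && D (g p.1, g p.2)).
Definition anti (D : {ffun 'I_k * 'I_k -> bool}) : bool :=
  [forall i, forall j, ~~ (D (i, j) && D (j, i))].
Definition ek (p : V * V) : nat := ltp p && E p.1 p.2.

Lemma moment g D : anti D ->
  \sum_(b : {ffun V * V -> bool}) 3 ^ Xv b g D <= 2 ^ #|{: V * V}| * 2 ^ (\sum_p ek p).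
Proof.
move=> /forallP aD.
pose H (p : V * V) (be : bool) := 3 ^ (E p.1 p.2 && be && D (g p.1, g p.2)) *
   3 ^ (E p.2 p.1 && ~~ be && D (g p.2, g p.1)).
have step b : 3 ^ Xv b g D = \prod_p (if ltp p then H p (b p) else 1).
  rewrite /Xv expn_sum prod_split.
  rewrite [X in _ * X]big1 ?muln1; last first.
    by move=> [u v] /= /eqP ->; rewrite /ob gE_irrefl.
  rewrite -big_mkcond; apply: eq_bigr => -[u v]; rewrite /ltp /= /H /ob /= => lt.
  by rewrite lt ltnNge (ltnW lt).
rewrite (eq_bigr _ (fun b _ => step b)).
rewrite -(bigA_distr_bigA (fun p be => if ltp p then H p be else 1)) /=.
have -> : 2 ^ #|{: V * V}| * 2 ^ (\sum_p ek p) = \prod_(p : V * V) (2 * 2 ^ ek p).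
  by rewrite big_split /= prod_nat_const expn_sum.
apply: leq_prod => -[u v] _; rewrite big_bool /= /H /ek /= [E v u]gE_sym.
case: (ltp (u, v)) => //=.
case: (E u v) => //=.
have := aD (g u); move=> /forallP /(_ (g v)).
by case: (D (g u, g v)); case: (D (g v, g u)).
Qed.


Lemma exists_good : exists b, forall g D, anti D ->
  3 ^ Xv b g D <= k ^ #|V| * 2 ^ (k * k) * 2 ^ (\sum_p ek p).
Proof.
set M := k ^ #|V| * 2 ^ (k * k) * 2 ^ (\sum_p ek p).
pose S b := \sum_(g : {ffun V -> 'I_k}) \sum_(D : {ffun 'I_k * 'I_k -> bool} | anti D) 3 ^ Xv b g D.
have tot : \sum_(b : {ffun V * V -> bool}) S b <= 2 ^ #|{: V * V}| * M.
  rewrite /S exchange_big /=.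
  apply: (@leq_trans (\sum_(g : {ffun V -> 'I_k}) \sum_(D : {ffun 'I_k * 'I_k -> bool})
              (2 ^ #|{: V * V}| * 2 ^ (\sum_p ek p)))).
    apply: leq_sum => g _; rewrite exchange_big /=.
    rewrite [X in _ <= X](bigID anti) /=; apply: leq_trans (leq_addr _ _).
    by apply: leq_sum => D aD; apply: moment.
  have c1 : #|{: {ffun V -> 'I_k}}| = k ^ #|V| by rewrite card_ffun card_ord.
  have c2 : #|{: {ffun 'I_k * 'I_k -> bool}}| = 2 ^ (k * k)
    by rewrite card_ffun card_bool card_prod card_ord.
  rewrite sum_nat_const sum_nat_const c1 c2.
  rewrite /M; move: (k ^ #|V|) (2 ^ (k * k)) (2 ^ #|{: V * V}|) (2 ^ (\sum_p ek p)) => a b c d.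
  by apply: eq_leq; lia.
case: (boolP [exists b, S b <= M]) => [/existsP [b Hb] | /existsPn Hn].
  exists b => g D aD; apply: leq_trans Hb; rewrite /S.
  rewrite (bigD1 g) //=; apply: leq_trans (leq_addr _ _).
  by rewrite (bigD1 D) //=; apply: leq_addr.
exfalso; move: tot; apply/negP; rewrite -ltnNge.
apply: (@leq_trans (\sum_(b : {ffun V * V -> bool}) M.+1)); last first.
  by apply: leq_sum => b _; rewrite ltnNge; apply: Hn.
rewrite sum_nat_const card_ffun card_bool.
by rewrite ltn_pmul2l // expn_gt0.
Qed.

Lemma numeric (n x e : nat) : 10 * k * n + 10 * k * k < 2 * e ->
  3 ^ x <= k ^ n * 2 ^ (k * k) * 2 ^ e -> 10 * x < 9 * e.
Proof.
move=> He Hx; rewrite ltnNge; apply/negP => H9.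
have h1 : 2 ^ (12 * e) <= 3 ^ (9 * e).
  have gen t : 16 ^ t <= 27 ^ t.
    by elim: t => // t IH; rewrite !expnS leq_mul.
  have e1 : 12 * e = 4 * (3 * e) by rewrite mulnA.
  have e2 : 9 * e = 3 * (3 * e) by rewrite mulnA.
  by rewrite e1 e2 (expnM 2 4) (expnM 3 3); apply: gen.
have h2 : 3 ^ (9 * e) <= (3 ^ x) ^ 10.
  by rewrite -expnM (mulnC x 10); apply: leq_pexp2l.
have hk : k ^ n <= 2 ^ (k * n).
  rewrite expnM; case: n {He Hx h1 h2} => [|n]; first by [].
  by rewrite leq_exp2r // ltnW // ltn_expl.
have h3 : (3 ^ x) ^ 10 <= (2 ^ (k * n + k * k + e)) ^ 10.
  rewrite leq_exp2r //; apply: (leq_trans Hx).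
  by rewrite !expnD leq_mul2r leq_mul2r hk !orbT.
have := leq_trans h1 (leq_trans h2 h3).
rewrite -expnM leq_exp2l //.
lia.
Qed.

Lemma final_comb :
  ((20 * k + 20)%:R < avg_degree G)%R ->
  exists b, (0 < \sum_p ek p) /\
     (forall g D, anti D -> 10 * Xv b g D < 9 * \sum_p ek p) /\
     (\sum_u \sum_v (ob b u v : nat) = \sum_p ek p).
Proof.
move=> Hd.
set s := \sum_p ek p.
set E2 := \sum_u \sum_v (E u v : nat).
have hs : s * 2 = E2.
  rewrite /E2 -(arcs2 (ob_orient [ffun=> true])) pair_bigA /s; congr (_ * 2).
  apply: eq_bigr => -[u v] _; rewrite /ob /ek /ltp ffunE /=.
  by rewrite ffunE; case: (E u v); case: (enum_rank u < enum_rank v).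
have hdeg : \sum_v #|[set u | E v u]| = E2.
  apply: eq_bigr => v _; rewrite -sum1dep_card big_mkcond /=.
  by apply: eq_bigr => u _; case: (E v u).
have hn2 : E2 <= #|V| * #|V|.
  apply: (@leq_trans (\sum_(u : V) \sum_(v : V) 1)).
    by apply: leq_sum => u _; apply: leq_sum => v _; apply: leq_b1.
  rewrite sum_nat_const sum_nat_const muln1.
  by apply: leq_mul; apply: eq_leq; apply: eq_card.
have [n0 | npos] := posnP #|V|.
  by move: Hd; rewrite /avg_degree n0 invr0 mulr0 ltNge ler0n.
move: Hd; rewrite /avg_degree hdeg ltr_pdivlMr ?ltr0n // -natrM ltr_nat => Hd.
have hk : k < #|V| by nia.
have [b Hb] := exists_good.
exists b; split; first by nia.
split.
  move=> g D aD; apply: (numeric (n := #|V|)); last exact: Hb.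
  nia.
have := arcs2 (ob_orient b); rewrite -/E2 -hs => /eqP; rewrite eqn_pmul2r //.
by move=> /eqP.
Qed.

End Comb.

Local Open Scope ring_scope.

Lemma ln_dist_sym (R : realType) a b : ln_dist R a b = ln_dist R b a.
Proof. by rewrite /ln_dist andbC orbC distrC. Qed.

Lemma ln_lem (R : realType) (a b : rat) : 0 < a -> 0 <= b ->
  (ln_dist R a b <= (100%:R^-1 : R)%:E)%E -> a * (99%:R / 100%:R) <= b.
Proof.
move=> a0 b0; rewrite /ln_dist (gt_eqF a0) /=.
have [->|bn0] := eqVneq b 0; first by rewrite leye_eq.
rewrite /= lee_fin => H.
have a'0 : (0 : R) < ratr a by rewrite ltr0q.
have b'0 : (0 : R) < ratr b by rewrite ltr0q lt_def bn0 b0.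
move: H; rewrite ler_norml => /andP[_ H].
have H2 : ln (ratr a) - 100%:R^-1 <= ln (ratr b :R) by lra.
have H3 := H2; rewrite -ler_expR lnK ?posrE // expRD lnK ?posrE // in H3.
have H4 := expR_ge1Dx (- (100%:R^-1 : R)).
rewrite -(ler_rat R) rmorphM /= fmorph_div /= !ratr_nat.
apply: le_trans H3.
rewrite ler_pM2l //.
apply: le_trans H4; lra.
Qed.

Section Opt.
Variables A B : estructure.

Lemma hom_value_ge0 (h : {ffun sdom A -> sdom B}) : 0 <= hom_value h.
Proof. by apply: sumr_ge0 => x _; apply: sumr_ge0 => y _; apply: mulr_ge0; apply: srel_ge0. Qed.

Lemma opt_ge (h : {ffun sdom A -> sdom B}) : hom_value h <= opt A B.
Proof. exact: le_bigmax. Qed.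

Lemma opt_ge0 : 0 <= opt A B.
Proof.
rewrite /opt; apply: (big_ind (fun x => 0 <= x)) => //.
  by move=> x y hx hy; rewrite le_max hx.
by move=> h _; apply: hom_value_ge0.
Qed.

Lemma opt_attain (h0 : {ffun sdom A -> sdom B}) : exists h : {ffun sdom A -> sdom B}, opt A B = hom_value h.
Proof.
eexists; rewrite /opt (bigmax_eq_arg _ h0) //.
by move=> i _; apply: hom_value_ge0.
Qed.

Lemma opt_le c : 0 <= c -> (forall h : {ffun sdom A -> sdom B}, hom_value h <= c) -> opt A B <= c.
Proof. by move=> c0 H; apply: bigmax_le. Qed.
End Opt.

Lemma dopt_le (R : realType) A B C e : (d_opt R A B <= e%:E)%E ->
  (ln_dist R (opt A C) (opt B C) <= e%:E)%E.
Proof.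
move=> H; apply: le_trans H; apply: ereal_sup_ubound; by exists C.
Qed.

Lemma sum_bool_mul (T : finType) (P Q : T -> T -> bool) :
  \sum_x \sum_y ((if P x y then 1 else 0) * (if Q x y then 1 else 0) : rat) =
  (\sum_x \sum_y (P x y && Q x y : nat))%:R.
Proof.
rewrite natr_sum; apply: eq_bigr => x _; rewrite natr_sum; apply: eq_bigr => y _.
by case: (P x y); case: (Q x y); rewrite ?mulr0 ?mulr1.
Qed.

Theorem lemma43 (R : realType) (cls : graph -> Prop) :
  unbounded_avg_degree cls -> ~ size_pliable R (orientations_of cls).
Proof.
move=> Hunb Hpl.
have eps_pos : (0 : R) < 100%:R^-1 by rewrite invr_gt0 ltr0n.
have [k Hk] := Hpl _ eps_pos.
have [G [cG Hd]] := Hunb ((20 * k + 20)%N%:R).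
have [b [spos [Hgood Harcs]]] := final_comb Hd.
set s := (\sum_p ek p)%N in spos Hgood Harcs.
set o := ob b.
pose A := orient_struct o.
have cA : orientations_of cls A.
  by exists G; split => //; exists o; split => //; apply: ob_orient.
have [B [HBk HdB]] := Hk A cA.
pose m : rat := s%:R.
have m0 : 0 < m by rewrite ltr0n.
have oAA : m <= opt A A.
  apply: le_trans (opt_ge [ffun x => x]).
  rewrite /hom_value /=.
  under eq_bigr do under eq_bigr do rewrite !ffunE.
  rewrite sum_bool_mul /m -Harcs ler_nat; apply: eq_leq.
  by apply: eq_bigr => x _; apply: eq_bigr => y _; rewrite andbb.
have oBA : opt A A * (99%:R / 100%:R) <= opt B A.
  apply: (ln_lem (R := R)); [exact: lt_le_trans oAA|exact: opt_ge0|exact: dopt_le].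
case: (pickP (fun _ : gV G => true)) => [v0 _|H0]; last first.
  move: spos; rewrite /s big_pred0 // => -[u v]; by rewrite H0.
have [h hh] := @opt_attain B A [ffun _ => v0].
pose C3 := @EStructure (sdom B) (fun x y => srel (h x) (h y)) (fun x y => srel_ge0 _ _).
have oBC : opt B A <= opt B C3.
  rewrite hh; apply: le_trans (@opt_ge B C3 [ffun x => x]).
  rewrite /hom_value /= le_eqVlt; apply/orP; left; apply/eqP; apply: eq_bigr => x _; apply: eq_bigr => y _.
  by rewrite !ffunE.
have oAC : opt B C3 * (99%:R / 100%:R) <= opt A C3.
  apply: (ln_lem (R := R)); [|exact: opt_ge0|].
    apply: lt_le_trans oBC; apply: lt_le_trans oBA.
    apply: mulr_gt0; [exact: lt_le_trans oAA| by []].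
  by rewrite ln_dist_sym; apply: dopt_le.
have oACle : opt A C3 <= m * (9%:R / 10%:R).
  apply: opt_le; first by apply: mulr_ge0; [exact: ltW|].
  move=> g.
  pose iota := fun x : sdom B => widen_ord HBk (enum_rank x).
  have iota_inj : injective iota.
    by move=> x y /(congr1 val) /= /val_inj /enum_rank_inj.
  pose g' := [ffun v => iota (g v)].
  pose D' := [ffun ij : 'I_k * 'I_k => [exists x, [exists y,
                (iota x == ij.1) && (iota y == ij.2) && o (h x) (h y)]]].
  have D'E x y : D' (iota x, iota y) = o (h x) (h y).
    rewrite ffunE /=; apply/existsP/idP => [[x' /existsP [y' /andP [/andP [/eqP e1 /eqP e2] H]]]|H].
      by rewrite -(iota_inj _ _ e1) -(iota_inj _ _ e2).
    by exists x; apply/existsP; exists y; rewrite !eqxx.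
  have aD : anti D'.
    apply/forallP => i; apply/forallP => j; apply/negP => /andP [].
    rewrite !ffunE /= => /existsP [x /existsP [y /andP [/andP [/eqP e1 /eqP e2] H1]]].
    move=> /existsP [x' /existsP [y' /andP [/andP [/eqP e1' /eqP e2'] H2]]].
    move: e1' e2'; rewrite -e1 -e2 => /iota_inj e1' /iota_inj e2'.
    move: H2; rewrite e1' e2' => H2.
    have [Ho1 Ho2] := ob_orient b.
    by move: (Ho2 _ _ (Ho1 _ _ H1)); rewrite -/o H1 H2.
  have := Hgood g' D' aD.
  have -> : hom_value g = (Xv b g' D')%:R.
    rewrite /hom_value /= sum_bool_mul /Xv pair_bigA; congr (_%:R).
    have g'E v : g' v = iota (g v) by rewrite ffunE.
    by apply: eq_bigr => -[u v] _ /=; rewrite !g'E D'E.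
  move=> HX.
  have : ((10 * Xv b g' D')%N%:R <= (9 * s)%N%:R :> rat) by rewrite ler_nat ltnW.
  rewrite !natrM /m => HX2.
  lra.
move: m0 oAA oBA oBC oAC oACle.
move: (opt A A) (opt B A) (opt B C3) (opt A C3) m => x1 x2 x3 x4 x5.
lra.
Qed.
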